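(* Fix $L,V,W,K>0$, $\pi\in(0,1)$, $k_0\in[0,K]$, and let $\bar g=\min\{\phi_1,\pi C,\phi_2\}$ with $\phi_1=\frac{k_0}{k_1}\pi C$, $\phi_2=\frac{K-k_0}{K-k_2}\pi C$, where $k_1\in[\pi\bar K,\bar K]$ and $k_2\in[\bar K,K-\pi\frac CW]$ are as in the context (depending on the cycle length $T$). Then: (1) If $k_0\in[0,\pi\bar K)$, then $\bar g=\phi_1$, which decreases in $k_1$ and is independent of $k_2$; the global maximum of $\bar g$ is $Vk_0$, attained when $T=\frac1{j_1}\frac LV$ (positive integer $j_1$), and the global minimum is $\pi Vk_0$, attained when $T\ge\frac1\pi\frac LV$. (2) If $k_0\in[\pi\bar K,\bar K)$, then $\bar g=\min\{\phi_1,\pi C\}$, which is constant for $k_1\in[\pi\bar K,k_0]$, decreasing for $k_1\in(k_0,\bar K]$, and independent of $k_2$; the global maximum is $\pi C$, and the global minimum is $\pi Vk_0$, attained when $T\ge\frac1\pi\frac LV$. (3) If $k_0=\bar K$, then $\bar g=\pi C$ for all $k_1,k_2$. (4) If $k_0\in(\bar K,K-\pi\frac CW]$, then $\bar g=\min\{\phi_2,\pi C\}$, which is increasing for $k_2\in[\bar K,k_0)$, constant for $k_2\in[k_0,K-\pi\frac CW]$, and independent of $k_1$; the global maximum is $\pi C$, and the global minimum is $\pi(K-k_0)W$, attained when $T\ge\frac1\pi\frac LW$. (5) If $k_0\in(K-\pi\frac CW,K]$, then $\bar g=\phi_2$, which increases in $k_2$ and is independent of $k_1$; the global maximum is $(K-k_0)W$,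 attained when $T=\frac1{j_2}\frac LW$ (positive integer $j_2$), and the global minimum is $\pi(K-k_0)W$, attained when $T\ge\frac1\pi\frac LW$.
   Context: $\bar K=\frac{W}{V+W}K$, $C=V\bar K$. For cycle length $T>0$: $\frac LV=(j_1+\alpha_1)T$, $j_1=\lfloor L/(VT)\rfloor$, $0\le\alpha_1<1$; $\frac LW=(j_2+\alpha_2)T$, $j_2=\lfloor L/(WT)\rfloor$, $0\le\alpha_2<1$; $k_1=\frac{j_1+\min\{\alpha_1/\pi,1\}}{j_1+\alpha_1}\pi\bar K$, $k_2=K-\frac{j_2+\min\{\alpha_2/\pi,1\}}{j_2+\alpha_2}\pi\frac CW$. Here $\bar g$ is the average flow-rate in stationary states (periodic with period $T$) of a ring road of length $L$ with LWR traffic, triangular fundamental diagram $\min\{Vk,(K-k)W\}$, average density $k_0$, and a pretimed signal with cycle length $T$ and effective green ratio $\pi$. *)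

(* Defs.v *)
From Stdlib Require Import Reals Lra.
Open Scope R_scope.

Definition Kbar (V W K : R) : R := W / (V + W) * K.
Definition Ccap (V W K : R) : R := V * Kbar V W K.

Definition jpart (x : R) : R := IZR (Int_part x).
Definition apart (x : R) : R := frac_part x.

Definition ratio (pi x : R) : R :=
  (jpart x + Rmin (apart x / pi) 1) / (jpart x + apart x).

Definition k1T (L V W K pi T : R) : R :=
  ratio pi (L / V / T) * pi * Kbar V W K.
Definition k2T (L V W K pi T : R) : R :=
  K - ratio pi (L / W / T) * pi * (Ccap V W K / W).

Definition phi1 (V W K pi k0 k1 : R) : R := k0 / k1 * pi * Ccap V W K.
Definition phi2 (V W K pi k0 k2 : R) : R := (K - k0) / (K - k2) * pi * Ccap V W K.

Definition Gk (V W K pi k0 k1 k2 : R) : R :=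
  Rmin (Rmin (phi1 V W K pi k0 k1) (pi * Ccap V W K)) (phi2 V W K pi k0 k2).

Definition gbarT (L V W K pi k0 T : R) : R :=
  Gk V W K pi k0 (k1T L V W K pi T) (k2T L V W K pi T).

Definition in_k1 (V W K pi k1 : R) : Prop := pi * Kbar V W K <= k1 <= Kbar V W K.
Definition in_k2 (V W K pi k2 : R) : Prop := Kbar V W K <= k2 <= K - pi * (Ccap V W K / W).

(* Main.v *)
Require Import Defs.
From Stdlib Require Import Reals Lra Lia.
Open Scope R_scope.

Lemma ratio_bounds pi x : 0 < pi < 1 -> 0 < x ->
  1 <= ratio pi x /\ ratio pi x * pi <= 1.
Proof.
  intros hp hx. unfold ratio, jpart, apart, frac_part.
  destruct (base_Int_part x) as [h1 h2].
  assert (hj : (Int_part x >= 0)%Z).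
  { assert (IZR (Int_part x) > -1) by lra.
    apply Z.le_ge. apply le_IZR. apply lt_IZR in H. simpl in *.
    apply IZR_le. lia. }
  apply IZR_ge in hj. set (j := IZR (Int_part x)) in *.
  replace (j + (x - j)) with x by ring.
  set (a := x - j) in *.
  assert (ha : 0 <= a < 1 /\ x = j + a) by (unfold a; lra). clearbody a j.
  assert (hip : pi * / pi = 1) by (field; lra).
  assert (hipp : 0 < / pi) by (apply Rinv_0_lt_compat; lra).
  assert (hxi : x * / x = 1) by (field; lra).
  assert (hxp : 0 < / x) by (apply Rinv_0_lt_compat; lra).
  assert (hm : x <= j + Rmin (a / pi) 1 /\ (j + Rmin (a / pi) 1) * pi <= x).
  { unfold Rmin; destruct (Rle_dec (a/pi) 1) as [h|h]; unfold Rdiv in *.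
    - assert (1 < / pi) by (apply (Rmult_lt_reg_l pi); lra).
      assert (a * / pi * pi = a) by (field; lra).
      split. nra. nra.
    - split. lra. nra. }
  destruct hm as [m1 m2]. unfold Rdiv. split.
  - nra.
  - assert ((j + Rmin (a * / pi) 1) * pi * / x <= x * / x) by nra. nra.
Qed.

Lemma ratio_nat pi (j : nat) : 0 < pi < 1 -> (0 < j)%nat -> ratio pi (INR j) = 1.
Proof.
  intros hp hj. unfold ratio, jpart, apart, frac_part.
  rewrite Int_part_INR, <- INR_IZR_INZ.
  replace (INR j - INR j) with 0 by ring.
  replace (0 / pi) with 0 by (field; lra).
  rewrite Rmin_left by lra.
  assert (0 < INR j) by (apply lt_0_INR; lia). field. lra.
Qed.

Lemma ratio_small pi x : 0 < pi < 1 -> 0 < x <= pi -> ratio pi x = / pi.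
Proof.
  intros hp hx. unfold ratio, jpart, apart, frac_part.
  assert (Int_part x = 0%Z).
  { symmetry. apply Int_part_spec. simpl. lra. }
  rewrite H. simpl.
  replace (0 + (x - 0)) with x by ring. replace (x - 0) with x by ring.
  rewrite Rmin_left.
  - field. lra.
  - unfold Rdiv. apply (Rmult_le_reg_r pi). lra.
    rewrite Rmult_assoc, Rinv_l; lra.
Qed.

Lemma dle a b p c : 0 < b -> 0 < p -> 0 < c -> a <= b -> a / b * p * c <= p * c.
Proof.
  intros. assert (a / b <= 1).
  { unfold Rdiv. apply (Rmult_le_reg_r b); auto. rewrite Rmult_assoc, Rinv_l; lra. }
  assert (0 < p * c) by nra. nra.
Qed.
Lemma dlt a b p c : 0 < b -> 0 < p -> 0 < c -> a < b -> a / b * p * c < p * c.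
Proof.
  intros. assert (a / b < 1).
  { unfold Rdiv. apply (Rmult_lt_reg_r b); auto. rewrite Rmult_assoc, Rinv_l; lra. }
  assert (0 < p * c) by nra. nra.
Qed.
Lemma dge a b p c : 0 < b -> 0 < p -> 0 < c -> b <= a -> p * c <= a / b * p * c.
Proof.
  intros. assert (1 <= a / b).
  { unfold Rdiv. apply (Rmult_le_reg_r b); auto. rewrite Rmult_assoc, Rinv_l; lra. }
  assert (0 < p * c) by nra. nra.
Qed.
Lemma dgt a b p c : 0 < b -> 0 < p -> 0 < c -> b < a -> p * c < a / b * p * c.
Proof.
  intros. assert (1 < a / b).
  { unfold Rdiv. apply (Rmult_lt_reg_r b); auto. rewrite Rmult_assoc, Rinv_l; lra. }
  assert (0 < p * c) by nra. nra.
Qed.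
Lemma dmono k a b p c : 0 < a -> a <= b -> 0 <= k -> 0 < p -> 0 < c ->
  k / b * p * c <= k / a * p * c.
Proof.
  intros. assert (/ b <= / a) by (apply Rinv_le_contravar; lra).
  assert (0 <= k * (/ a - / b)) by (apply Rmult_le_pos; lra).
  assert (0 < p * c) by nra. unfold Rdiv. nra.
Qed.
Lemma dmono_s k a b p c : 0 < a -> a < b -> 0 < k -> 0 < p -> 0 < c ->
  k / b * p * c < k / a * p * c.
Proof.
  intros. assert (/ b < / a) by (apply Rinv_lt_contravar; nra).
  assert (0 < k * (/ a - / b)) by (apply Rmult_lt_0_compat; lra).
  assert (0 < p * c) by nra. unfold Rdiv. nra.
Qed.
Lemma rbound r pi X : 0 < pi -> 1 <= r -> r * pi <= 1 -> 0 <= X -> pi * X <= X / r <= X.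
Proof.
  intros. assert (0 < r) by lra. assert (/ r <= 1).
  { rewrite <- Rinv_1. apply Rinv_le_contravar; lra. }
  assert (pi <= / r).
  { apply (Rmult_le_reg_r r); auto. rewrite Rinv_l; lra. }
  unfold Rdiv. split; nra.
Qed.
Lemma small_arg pi y T : 0 < pi -> 0 < y -> / pi * y <= T -> 0 < T /\ 0 < y / T <= pi.
Proof.
  intros. assert (0 < / pi * y) by (apply Rmult_lt_0_compat; auto; apply Rinv_0_lt_compat; auto).
  assert (0 < T) by lra. split; auto. split.
  - apply Rdiv_lt_0_compat; auto.
  - unfold Rdiv. apply (Rmult_le_reg_r T); auto. rewrite Rmult_assoc, Rinv_l by lra.
    rewrite Rmult_1_r. assert (pi * (/ pi * y) = y) by (field; lra). nra.
Qed.
Theorem lemma3p5 (L V W K pi k0 : R)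
  (hL : 0 < L) (hV : 0 < V) (hW : 0 < W) (hK : 0 < K)
  (hpi : 0 < pi < 1) (hk0 : 0 <= k0 <= K) :
  let Kb := Kbar V W K in
  let C := Ccap V W K in
  let G := Gk V W K pi k0 in
  let p1 := phi1 V W K pi k0 in
  let p2 := phi2 V W K pi k0 in
  let g := gbarT L V W K pi k0 in
  let I1 := in_k1 V W K pi in
  let I2 := in_k2 V W K pi in
  (* (1) *)
  ((0 <= k0 < pi * Kb) ->
     (forall k1 k2, I1 k1 -> I2 k2 -> G k1 k2 = p1 k1) /\
     (forall k1 k2 k2', I1 k1 -> I2 k2 -> I2 k2' -> G k1 k2 = G k1 k2') /\
     (forall k2 a b, I2 k2 -> I1 a -> I1 b -> a < b -> G b k2 <= G a k2) /\
     (0 < k0 -> forall k2 a b, I2 k2 -> I1 a -> I1 b -> a < b -> G b k2 < G a k2) /\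
     (forall T, 0 < T -> g T <= V * k0) /\
     (forall j : nat, (0 < j)%nat -> g (/ INR j * (L / V)) = V * k0) /\
     (forall T, 0 < T -> pi * V * k0 <= g T) /\
     (forall T, / pi * (L / V) <= T -> g T = pi * V * k0)) /\
  (* (2) *)
  ((pi * Kb <= k0 < Kb) ->
     (forall k1 k2, I1 k1 -> I2 k2 -> G k1 k2 = Rmin (p1 k1) (pi * C)) /\
     (forall k1 k2 k2', I1 k1 -> I2 k2 -> I2 k2' -> G k1 k2 = G k1 k2') /\
     (forall k2 a b, I2 k2 -> I1 a -> I1 b -> a <= k0 -> b <= k0 -> G a k2 = G b k2) /\
     (forall k2 a b, I2 k2 -> k0 < a -> a < b -> b <= Kb -> G b k2 < G a k2) /\
     (forall T, 0 < T -> g T <= pi * C) /\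
     (exists T, 0 < T /\ g T = pi * C) /\
     (forall T, 0 < T -> pi * V * k0 <= g T) /\
     (forall T, / pi * (L / V) <= T -> g T = pi * V * k0)) /\
  (* (3) *)
  (k0 = Kb ->
     (forall k1 k2, I1 k1 -> I2 k2 -> G k1 k2 = pi * C) /\
     (forall T, 0 < T -> g T = pi * C)) /\
  (* (4) *)
  ((Kb < k0 <= K - pi * (C / W)) ->
     (forall k1 k2, I1 k1 -> I2 k2 -> G k1 k2 = Rmin (p2 k2) (pi * C)) /\
     (forall k1 k1' k2, I1 k1 -> I1 k1' -> I2 k2 -> G k1 k2 = G k1' k2) /\
     (forall k1 a b, I1 k1 -> Kb <= a -> a < b -> b < k0 -> G k1 a < G k1 b) /\
     (forall k1 a b, I1 k1 -> I2 a -> I2 b -> k0 <= a -> k0 <= b -> G k1 a = G k1 b) /\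
     (forall T, 0 < T -> g T <= pi * C) /\
     (exists T, 0 < T /\ g T = pi * C) /\
     (forall T, 0 < T -> pi * (K - k0) * W <= g T) /\
     (forall T, / pi * (L / W) <= T -> g T = pi * (K - k0) * W)) /\
  (* (5) *)
  ((K - pi * (C / W) < k0 <= K) ->
     (forall k1 k2, I1 k1 -> I2 k2 -> G k1 k2 = p2 k2) /\
     (forall k1 k1' k2, I1 k1 -> I1 k1' -> I2 k2 -> G k1 k2 = G k1' k2) /\
     (forall k1 a b, I1 k1 -> I2 a -> I2 b -> a < b -> G k1 a <= G k1 b) /\
     (k0 < K -> forall k1 a b, I1 k1 -> I2 a -> I2 b -> a < b -> G k1 a < G k1 b) /\
     (forall T, 0 < T -> g T <= (K - k0) * W) /\
     (forall j : nat, (0 < j)%nat -> g (/ INR j * (L / W)) = (K - k0) * W) /\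
     (forall T, 0 < T -> pi * (K - k0) * W <= g T) /\
     (forall T, / pi * (L / W) <= T -> g T = pi * (K - k0) * W)).
Proof.
  assert (hKbe : Kbar V W K * (V + W) = W * K) by (unfold Kbar; field; lra).
  assert (hKb : 0 < Kbar V W K < K) by (split; nra).
  assert (hCV : Ccap V W K = V * Kbar V W K) by reflexivity.
  assert (hCW : Ccap V W K = W * (K - Kbar V W K)) by (rewrite hCV; nra).
  assert (hCWd : Ccap V W K / W = K - Kbar V W K) by (rewrite hCW; field; lra).
  cbv zeta. unfold gbarT, Gk, phi1, phi2, k1T, k2T, in_k1, in_k2.
  rewrite !hCWd.
  set (Kb := Kbar V W K) in *. set (C := Ccap V W K) in *. clearbody Kb C.
  assert (hC : 0 < C) by (rewrite hCV; nra).
  assert (hpC : 0 < pi * C) by nra.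
  assert (hr1 : forall T, 0 < T -> 1 <= ratio pi (L / V / T) /\ ratio pi (L / V / T) * pi <= 1).
  { intros. apply ratio_bounds; auto. apply Rdiv_lt_0_compat; auto. apply Rdiv_lt_0_compat; auto. }
  assert (hr2 : forall T, 0 < T -> 1 <= ratio pi (L / W / T) /\ ratio pi (L / W / T) * pi <= 1).
  { intros. apply ratio_bounds; auto. apply Rdiv_lt_0_compat; auto. apply Rdiv_lt_0_compat; auto. }
  assert (hv1 : forall r, 1 <= r -> k0 / (r * pi * Kb) * pi * C = V * k0 / r).
  { intros. rewrite hCV. field. repeat split; lra. }
  assert (hv2 : forall r, 1 <= r -> (K - k0) / (K - (K - r * pi * (K - Kb))) * pi * C = W * (K - k0) / r).
  { intros. rewrite hCW. replace (K - (K - r * pi * (K - Kb))) with (r * pi * (K - Kb)) by ring. field. repeat split; lra. }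
  assert (hKK : 0 < pi * (K - Kb)) by nra.
  assert (hpV : 0 < pi * V) by nra.
  assert (hpKb : 0 < pi * Kb) by nra.
  assert (hpW : 0 < pi * W) by nra.
  assert (hI : forall T, 0 < T -> (pi * Kb <= ratio pi (L / V / T) * pi * Kb <= Kb) /\
     (Kb <= K - ratio pi (L / W / T) * pi * (K - Kb) <= K - pi * (K - Kb))).
  { intros T hT; destruct (hr1 T hT), (hr2 T hT); split; split; nra. }
  assert (hTj : forall (j : nat) y, (0 < j)%nat -> 0 < y -> 0 < / INR j * y /\ y / (/ INR j * y) = INR j).
  { intros j y hj hy. assert (0 < INR j) by (apply lt_0_INR; lia).
    split. apply Rmult_lt_0_compat; auto. apply Rinv_0_lt_compat; auto. field; lra. }
  assert (hLV : 0 < L / V) by (apply Rdiv_lt_0_compat; auto).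
  assert (hLW : 0 < L / W) by (apply Rdiv_lt_0_compat; auto).
  split; [|split; [|split; [|split]]].
  -
    intros hr.
    assert (c1 : forall k1 k2, pi * Kb <= k1 <= Kb -> Kb <= k2 <= K - pi * (K - Kb) ->
      Rmin (Rmin (k0 / k1 * pi * C) (pi * C)) ((K - k0) / (K - k2) * pi * C) = k0 / k1 * pi * C).
    { intros k1 k2 h1 h2. rewrite (Rmin_left (k0 / k1 * pi * C) (pi * C)) by (apply dle; lra). apply Rmin_left.
      apply Rle_trans with (pi * C). apply dle; lra. apply dge; lra. }
    split; [exact c1|]. split.
    { intros k1 k2 k2' h1 h2 h2'. rewrite !(c1 k1) by auto. reflexivity. }
    split.
    { intros k2 a b h2 ha hb hab. rewrite (c1 a), (c1 b) by auto. apply dmono; lra. }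
    split.
    { intros hk k2 a b h2 ha hb hab. rewrite (c1 a), (c1 b) by auto. apply dmono_s; lra. }
    split.
    { intros T hT. destruct (hI T hT). destruct (hr1 T hT). rewrite c1, hv1 by auto.
      assert (0 <= V * k0) by nra. pose proof (rbound (ratio pi (L / V / T)) pi (V * k0)). lra. }
    split.
    { intros j hj. destruct (hTj j (L / V) hj hLV) as [hT he].
      destruct (hI _ hT). rewrite c1 by auto. rewrite he, ratio_nat by auto.
      rewrite hCV. field. lra. }
    split.
    { intros T hT. destruct (hI T hT). destruct (hr1 T hT). rewrite c1, hv1 by auto.
      assert (0 <= V * k0) by nra. pose proof (rbound (ratio pi (L / V / T)) pi (V * k0)). lra. }
    { intros T hT. destruct (small_arg pi (L / V) T) as [hT0 hx]; try lra.
      destruct (hI _ hT0). rewrite c1 by auto. rewrite ratio_small by auto.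
      rewrite hCV. field. lra. }
  -
    intros hr.
    assert (c1 : forall k1 k2, pi * Kb <= k1 <= Kb -> Kb <= k2 <= K - pi * (K - Kb) ->
      Rmin (Rmin (k0 / k1 * pi * C) (pi * C)) ((K - k0) / (K - k2) * pi * C) = Rmin (k0 / k1 * pi * C) (pi * C)).
    { intros k1 k2 h1 h2. apply Rmin_left.
      apply Rle_trans with (pi * C). apply Rmin_r. apply dge; lra. }
    split; [exact c1|]. split.
    { intros k1 k2 k2' h1 h2 h2'. rewrite !(c1 k1) by auto. reflexivity. }
    split.
    { intros k2 a b h2 ha hb hak hbk. rewrite (c1 a), (c1 b) by auto.
      rewrite !Rmin_right by (apply dge; lra). reflexivity. }
    split.
    { intros k2 a b h2 hka hab hbK. rewrite (c1 a), (c1 b) by (auto; lra).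
      rewrite !Rmin_left by (apply dle; lra). apply dmono_s; lra. }
    split.
    { intros T hT. destruct (hI T hT). rewrite c1 by auto. apply Rmin_r. }
    split.
    { exists (L / V). split; auto. destruct (hI _ hLV). rewrite c1 by auto.
      replace (L / V / (L / V)) with (INR 1) by (simpl; field; lra).
      rewrite ratio_nat by auto. apply Rmin_right. apply dge; lra. }
    assert (hlt : pi * V * k0 < pi * C) by (rewrite hCV; nra).
    split.
    { intros T hT. destruct (hI T hT). destruct (hr1 T hT). rewrite c1, hv1 by auto.
      assert (0 <= V * k0) by nra. pose proof (rbound (ratio pi (L / V / T)) pi (V * k0)).
      apply Rmin_glb; lra. }
    { intros T hT. destruct (small_arg pi (L / V) T) as [hT0 hx]; try lra.
      destruct (hI _ hT0). rewrite c1 by auto. rewrite ratio_small by auto.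
      replace (k0 / (/ pi * pi * Kb) * pi * C) with (pi * V * k0) by (rewrite hCV; field; lra).
      apply Rmin_left. lra. }
  -
    intros hr.
    assert (c1 : forall k1 k2, pi * Kb <= k1 <= Kb -> Kb <= k2 <= K - pi * (K - Kb) ->
      Rmin (Rmin (k0 / k1 * pi * C) (pi * C)) ((K - k0) / (K - k2) * pi * C) = pi * C).
    { intros k1 k2 h1 h2. rewrite (Rmin_right (k0 / k1 * pi * C) (pi * C)) by (apply dge; lra). apply Rmin_left. apply dge; lra. }
    split; [exact c1|].
    intros T hT. destruct (hI T hT). apply c1; auto.
  -
    intros hr.
    assert (c1 : forall k1 k2, pi * Kb <= k1 <= Kb -> Kb <= k2 <= K - pi * (K - Kb) ->
      Rmin (Rmin (k0 / k1 * pi * C) (pi * C)) ((K - k0) / (K - k2) * pi * C) = Rmin ((K - k0) / (K - k2) * pi * C) (pi * C)).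
    { intros k1 k2 h1 h2. rewrite (Rmin_right (k0 / k1 * pi * C) (pi * C)) by (apply dge; lra). apply Rmin_comm. }
    split; [exact c1|]. split.
    { intros k1 k1' k2 h1 h1' h2. rewrite (c1 k1), (c1 k1') by auto. reflexivity. }
    split.
    { intros k1 a b h1 hKa hab hbk. rewrite (c1 k1 a), (c1 k1 b) by (auto; lra).
      rewrite !Rmin_left by (apply dle; lra). apply dmono_s; lra. }
    split.
    { intros k1 a b h1 ha hb hka hkb. rewrite (c1 k1 a), (c1 k1 b) by auto.
      rewrite !Rmin_right by (apply dge; lra). reflexivity. }
    split.
    { intros T hT. destruct (hI T hT). rewrite c1 by auto. apply Rmin_r. }
    split.
    { exists (L / W). split; auto. destruct (hI _ hLW). rewrite c1 by auto.
      replace (L / W / (L / W)) with (INR 1) by (simpl; field; lra).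
      rewrite ratio_nat by auto. apply Rmin_right. apply dge; lra. }
    assert (hlt : pi * (K - k0) * W < pi * C) by (rewrite hCW; nra).
    split.
    { intros T hT. destruct (hI T hT). destruct (hr2 T hT). rewrite c1, hv2 by auto.
      assert (0 <= W * (K - k0)) by nra. pose proof (rbound (ratio pi (L / W / T)) pi (W * (K - k0))).
      apply Rmin_glb; lra. }
    { intros T hT. destruct (small_arg pi (L / W) T) as [hT0 hx]; try lra.
      destruct (hI _ hT0). rewrite c1 by auto. rewrite ratio_small by auto.
      replace ((K - k0) / (K - (K - / pi * pi * (K - Kb))) * pi * C) with (pi * (K - k0) * W)
        by (rewrite hCW; field; lra).
      apply Rmin_left. lra. }
  -
    intros hr.
    assert (c1 : forall k1 k2, pi * Kb <= k1 <= Kb -> Kb <= k2 <= K - pi * (K - Kb) ->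
      Rmin (Rmin (k0 / k1 * pi * C) (pi * C)) ((K - k0) / (K - k2) * pi * C) = (K - k0) / (K - k2) * pi * C).
    { intros k1 k2 h1 h2. apply Rmin_right. apply Rmin_glb.
      apply Rle_trans with (pi * C). apply dle; lra. apply dge; lra. apply dle; lra. }
    split; [exact c1|]. split.
    { intros k1 k1' k2 h1 h1' h2. rewrite (c1 k1), (c1 k1') by auto. reflexivity. }
    split.
    { intros k1 a b h1 ha hb hab. rewrite (c1 k1 a), (c1 k1 b) by auto. apply dmono; lra. }
    split.
    { intros hk k1 a b h1 ha hb hab. rewrite (c1 k1 a), (c1 k1 b) by auto. apply dmono_s; lra. }
    split.
    { intros T hT. destruct (hI T hT). destruct (hr2 T hT). rewrite c1, hv2 by auto.
      assert (0 <= W * (K - k0)) by nra. pose proof (rbound (ratio pi (L / W / T)) pi (W * (K - k0))). lra. }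
    split.
    { intros j hj. destruct (hTj j (L / W) hj hLW) as [hT he].
      destruct (hI _ hT). rewrite c1 by auto. rewrite he, ratio_nat by auto.
      rewrite hCW. field. lra. }
    split.
    { intros T hT. destruct (hI T hT). destruct (hr2 T hT). rewrite c1, hv2 by auto.
      assert (0 <= W * (K - k0)) by nra. pose proof (rbound (ratio pi (L / W / T)) pi (W * (K - k0))). lra. }
    { intros T hT. destruct (small_arg pi (L / W) T) as [hT0 hx]; try lra.
      destruct (hI _ hT0). rewrite c1 by auto. rewrite ratio_small by auto.
      rewrite hCW. field. lra. }
Qed.
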